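(* Let $a<b$ and let $f:[a,b]\to\mathbb{R}$ be continuous. Define $$I_f(a,b)=\frac{1}{b-a}\int_a^b f(t)\,\mathrm{d}t,\quad B_f(a,b)=\frac{b-a}{2}\,I_f(a,b),\quad J_f(a,b)=b\,I_f(a,b)-\frac{1}{b-a}\int_a^b t\,f(t)\,\mathrm{d}t.$$ If $B_f(a,b)=J_f(a,b)$, then there exists $\eta\in(a,b)$ such that $f(\eta)=I_f(a,\eta)$, where $I_f(a,\eta)=\frac{1}{\eta-a}\int_a^\eta f(t)\,\mathrm{d}t$. *)

(* Defs.v *)
From Stdlib Require Import Reals.
From Coquelicot Require Import Coquelicot.
Open Scope R_scope.

Definition continuous_on_Icc (f : R -> R) (a b : R) : Prop :=
  forall x, a <= x <= b ->
    filterlim f (within (fun t => a <= t <= b) (locally x)) (locally (f x)).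

Definition I_f (f : R -> R) (a b : R) : R := / (b - a) * RInt f a b.

Definition B_f (f : R -> R) (a b : R) : R := (b - a) / 2 * I_f f a b.

Definition J_f (f : R -> R) (a b : R) : R :=
  b * I_f f a b - / (b - a) * RInt (fun t => t * f t) a b.

(* Main.v *)
Require Import Defs.
From Stdlib Require Import Reals Lra.
From Coquelicot Require Import Coquelicot.
Open Scope R_scope.

Lemma kder (F T : R -> R) (x a gx : R) :
  is_derive F x gx -> is_derive T x (x * gx) ->
  is_derive (fun y => F y * (y - a) - 2 * (y * F y - T y)) x (gx * (x - a) - F x).
Proof.
  intros HF HT.
  assert (Hl : is_derive (fun y:R => y - a) x 1).
  { auto_derive; auto; ring. }
  assert (Hid : is_derive (fun y:R => y) x 1).
  { auto_derive; auto. }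
  assert (H1 := is_derive_mult _ _ _ _ _ HF Hl Rmult_comm).
  assert (H2 := is_derive_mult _ _ _ _ _ Hid HF Rmult_comm).
  assert (H3 := is_derive_minus _ _ _ _ _ H2 HT).
  assert (H4 := is_derive_scal _ _ 2 _ H3).
  assert (H5 := is_derive_minus _ _ _ _ _ H1 H4).
  simpl in H5. unfold mult, plus, minus, opp in H5; simpl in H5.
  eapply is_derive_ext; [| replace (gx * (x - a) - F x) with
    ((gx * (x - a) + F x * 1) + - (2 * ((1 * F x + x * gx) + - (x * gx)))) by ring; exact H5].
  intros t; simpl. unfold mult, plus, minus, opp; simpl. ring.
Qed.

Lemma clamp_lip (a b x y : R) : a <= b ->
  Rabs (Rmax a (Rmin b x) - Rmax a (Rmin b y)) <= Rabs (x - y).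
Proof.
  intros. unfold Rmax, Rmin.
  repeat (destruct Rle_dec); unfold Rabs; repeat destruct Rcase_abs; lra.
Qed.

Lemma clamp_in (a b x : R) : a <= b -> a <= Rmax a (Rmin b x) <= b.
Proof. intros. unfold Rmax, Rmin. repeat destruct Rle_dec; lra. Qed.

Lemma clamp_id (a b x : R) : a <= x <= b -> Rmax a (Rmin b x) = x.
Proof. intros. unfold Rmax, Rmin. repeat destruct Rle_dec; lra. Qed.

Theorem mainTheorem7 (f : R -> R) (a b : R) :
  a < b ->
  continuous_on_Icc f a b ->
  B_f f a b = J_f f a b ->
  exists eta, a < eta < b /\ f eta = I_f f a eta.
Proof.
  intros Hab Hcont H.
  set (c := fun t => Rmax a (Rmin b t)).
  set (g := fun t => f (c t)).
  assert (Hg : forall x, continuous g x).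
  { intros x. apply filterlim_locally. intros eps.
    assert (Hin := clamp_in a b x (Rlt_le _ _ Hab)).
    assert (Hc := Hcont (c x) Hin).
    apply filterlim_locally with (eps := eps) in Hc.
    destruct Hc as [d Hd]. exists d. intros y Hy.
    apply Hd.
    - unfold ball in *; simpl in *; unfold AbsRing_ball in *; simpl in *.
      unfold abs, minus, plus, opp in *; simpl in *.
      eapply Rle_lt_trans; [apply clamp_lip; lra | exact Hy].
    - apply clamp_in; lra. }
  assert (Hgt : forall x, continuous (fun t => t * g t) x).
  { intros x. apply (continuous_mult (fun t => t) g). apply continuous_id. apply Hg. }
  assert (dF : forall x, is_derive (fun y => RInt g a y) x (g x)).
  { intros x. apply is_derive_RInt with (a := a).
    - apply filter_forall. intros y. apply RInt_correct, ex_RInt_continuous.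
      intros; apply Hg.
    - apply Hg. }
  assert (dT : forall x, is_derive (fun y => RInt (fun t => t * g t) a y) x (x * g x)).
  { intros x. apply is_derive_RInt with (f := fun t => t * g t) (a := a).
    - apply filter_forall. intros y. apply (RInt_correct (fun t => t * g t)).
      apply ex_RInt_continuous. intros; apply Hgt.
    - apply Hgt. }
  set (F := fun y => RInt g a y).
  set (T := fun y => RInt (fun t => t * g t) a y).
  set (k := fun y => F y * (y - a) - 2 * (y * F y - T y)).
  destruct (MVT_cor2 k (fun x => g x * (x - a) - F x) a b Hab) as [e [He1 He2]].
  { intros x _. apply is_derive_Reals. apply kder; [apply dF | apply dT]. }
  assert (Eint : forall h : R -> R, forall u, a <= u <= b ->
            RInt (fun t => h t * f t) a u = RInt (fun t => h t * g t) a u).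
  { intros h u Hu. apply RInt_ext. intros x Hx. unfold g, c.
    rewrite Rmin_left in Hx by lra. rewrite Rmax_right in Hx by lra.
    rewrite clamp_id; [reflexivity | lra]. }
  assert (EF : forall u, a <= u <= b -> RInt f a u = F u).
  { intros u Hu. unfold F. 
    assert (Hx := Eint (fun _ => 1) u Hu). simpl in Hx.
    transitivity (RInt (fun t => 1 * f t) a u).
    { apply RInt_ext. intros x _. simpl. ring. }
    rewrite Hx. apply RInt_ext. intros x _. simpl. ring. }
  assert (ET : RInt (fun t => t * f t) a b = T b).
  { apply (Eint (fun t => t) b). lra. }
  assert (Ka : k a = 0).
  { unfold k, F, T. rewrite !RInt_point. unfold zero; simpl. ring. }
  assert (Kb : k b = 0).
  { unfold B_f, J_f, I_f in H. rewrite ET, (EF b) in H by lra.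
    unfold k.
    assert (Hba : b - a <> 0) by lra.
    transitivity (2 * (b - a) * ((b - a) / 2 * (/ (b - a) * F b) -
       (b * (/ (b - a) * F b) - / (b - a) * T b))).
    - field. exact Hba.
    - rewrite H. ring. }
  rewrite Ka, Kb in He1.
  assert (Hd : g e * (e - a) - F e = 0).
  { assert (Hba : b - a <> 0) by lra.
    apply (Rmult_eq_reg_r (b - a)); [|exact Hba]. rewrite Rmult_0_l. cbv beta in He1. lra. }
  exists e. split; [exact He2|].
  unfold I_f. rewrite (EF e) by lra.
  assert (Hfe : f e = g e).
  { unfold g, c. rewrite clamp_id; [reflexivity | lra]. }
  rewrite Hfe. replace (F e) with (g e * (e - a)) by lra. field. lra.
Qed.
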